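(* Let $q\ge2$ be a prime power, $d\ge6$, $2\le j\le d$, $1\le i\le d-3$, and $h_{\max}=\min\{j,d-i\}$. (i) If $j\le d-i-1$, then $\frac{43}{78}|T_{h_{\max}}(i,j)|\le|Q_j(i)|\le\frac{113}{78}|T_{h_{\max}}(i,j)|$. (ii) If $j=d-i$, then $\frac{691}{1296}|T_{h_{\max}}(i,j)|\le|Q_j(i)|\le\frac{1901}{1296}|T_{h_{\max}}(i,j)|$. (iii) If $j\ge d-i+1$, then $\frac{31}{216}|T_{h_{\max}}(i,j)|\le|Q_j(i)|\le\frac{401}{216}|T_{h_{\max}}(i,j)|$. In particular, $Q_j(i)$ has the same sign as $T_{h_{\max}}(i,j)$.
   Context: Let $b=-q$. For integers $m\ge0$ and $l$, ${m\brack l}_b=\prod_{t=1}^{l}\frac{b^{m-t+1}-1}{b^t-1}$ for $l\ge0$ and $0$ for $l<0$. For $0\le i,j\le d$, $$Q_j(i)=\sum_{h=0}^{\min\{j,d-i\}}(-1)^j(-q)^{\binom{j-h}{2}+hd}{d-h\brack d-j}_b{d-i\brack h}_b,$$ the eigenvalues of the Hermitian forms graph $Q_q(d,j)$. $T_h(i,j)$ denotes the $h$-th summand (including the factor $(-1)^j$). *)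

(* Defs.v *)
From mathcomp Require Import all_boot all_order all_algebra.
Set Implicit Arguments. Unset Strict Implicit. Unset Printing Implicit Defensive.
Import Order.TTheory GRing.Theory Num.Theory.
Local Open Scope ring_scope.

(* Gaussian binomial [m brack l]_b = prod_{t=1}^l (b^{m-t+1}-1)/(b^t-1), l >= 0.
   (In the statement all lower indices are naturals, so the l<0 case never arises.) *)
Definition gauss (b : rat) (m l : nat) : rat :=
  \prod_(1 <= t < l.+1) ((b ^+ (m - t + 1) - 1) / (b ^+ t - 1)).

Definition Tterm (q : nat) (d i j h : nat) : rat :=
  (-1) ^+ j * (- (q%:R : rat)) ^+ ('C(j - h, 2) + h * d)%N
  * gauss (- (q%:R)) (d - h) (d - j) * gauss (- (q%:R)) (d - i) h.

Definition Qeig (q : nat) (d i j : nat) : rat :=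
  \sum_(0 <= h < (minn j (d - i)).+1) Tterm q d i j h.

(* Main.v *)
Require Import Defs.
From mathcomp Require Import all_boot all_order all_algebra.
From mathcomp Require Import ring lra zify.
Import Order.TTheory GRing.Theory Num.Theory.
Local Open Scope ring_scope.

Lemma gauss0 (b : rat) m : gauss b m 0 = 1.
Proof. by rewrite /gauss big_geq. Qed.

Lemma gaussS (b : rat) m l : (l < m)%N ->
  gauss b m l.+1 = gauss b m l * ((b ^+ (m - l) - 1) / (b ^+ l.+1 - 1)).
Proof.
move=> lm; rewrite /gauss big_nat_recr //=.
by have -> : (m - l.+1 + 1 = m - l)%N by lia.
Qed.

Lemma gaussM (b : rat) M L : (L < M)%N ->
  gauss b M L * (b ^+ (M - L) - 1) = gauss b M.-1 L * (b ^+ M - 1).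
Proof.
elim: L => [|L IH] LM.
  by rewrite !gauss0 subn0.
rewrite (gaussS b M); last lia.
rewrite (gaussS b M.-1); last lia.
have -> : (M.-1 - L = M - L.+1)%N by lia.
transitivity (gauss b M L * (b ^+ (M - L) - 1) * ((b ^+ (M - L.+1) - 1) / (b ^+ L.+1 - 1))); first ring.
rewrite IH; last lia.
ring.
Qed.

Lemma xpow_neq1 (q : nat) n : (2 <= q)%N -> (0 < n)%N -> (- (q%:R : rat)) ^+ n - 1 != 0.
Proof.
move=> q2 n0; rewrite subr_eq0; apply/eqP=> E.
have : `|(- (q%:R : rat)) ^+ n| = 1 by rewrite E normr1.
rewrite normrX normrN ger0_norm ?ler0n // -natrX => /eqP; rewrite pnatr_eq1 => /eqP H.
have : (2 ^ n <= q ^ n)%N by rewrite leq_exp2r.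
have : (2 <= 2 ^ n)%N by rewrite -{1}(expn1 2) leq_exp2l.
lia.
Qed.

Lemma gaussS' (b : rat) m l : (l < m)%N -> b ^+ l.+1 - 1 != 0 ->
  gauss b m l.+1 * (b ^+ l.+1 - 1) = gauss b m l * (b ^+ (m - l) - 1).
Proof.
move=> lm nz; rewrite gaussS //; field; exact: nz.
Qed.

Lemma T_rec (q d i j h : nat) : (2 <= q)%N -> (h < j)%N -> (h < d - i)%N -> (j <= d)%N ->
  let x := - (q%:R : rat) in
  Tterm q d i j h * ((x ^+ (j - h) - 1) * (x ^+ (d - i - h) - 1) * x ^+ (d + 1 + h - j))
  = Tterm q d i j h.+1 * ((x ^+ (d - h) - 1) * (x ^+ h.+1 - 1)).
Proof.
move=> q2 hj hdi jd x; rewrite /Tterm -/x.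
have E1 : (('C(j - h, 2) + h * d) + (d + 1 + h - j) = 'C(j - h.+1, 2) + h.+1 * d)%N.
  have -> : (j - h = (j - h.+1).+1)%N by lia.
  rewrite binS bin1. have : (j - h.+1 <= d)%N by lia.
  move: ('C(j - h.+1, 2)) => c; lia.
have G1 := gaussM x (d - h) (d - j) ltac:(lia).
rewrite (_ : (d - h - (d - j) = j - h)%N) in G1; last lia.
rewrite (_ : ((d - h).-1 = d - h.+1)%N) in G1; last lia.
have G2 := gaussS' x (d - i) h ltac:(lia) (@xpow_neq1 q h.+1 q2 (ltn0Sn h)).
rewrite -E1 !exprD.
transitivity ((-1) ^+ j * (x ^+ 'C(j - h, 2) * x ^+ (h * d)) * x ^+ (d + 1 + h - j) *
   (gauss x (d - h) (d - j) * (x ^+ (j - h) - 1)) * (gauss x (d - i) h * (x ^+ (d - i - h) - 1))).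
  ring.
rewrite G1 -G2; ring.
Qed.

Definition Aq (q n : nat) : rat := `|(- (q%:R : rat)) ^+ n - 1|.

Lemma u_rec (q d i j h : nat) : (2 <= q)%N -> (h < j)%N -> (h < d - i)%N -> (j <= d)%N ->
  `|Tterm q d i j h| * (Aq q (j - h) * Aq q (d - i - h) * (q%:R : rat) ^+ (d + 1 + h - j))
  = `|Tterm q d i j h.+1| * (Aq q (d - h) * Aq q h.+1).
Proof.
move=> q2 hj hdi jd; have := congr1 Num.Def.normr (@T_rec q d i j h q2 hj hdi jd).
move=> E; rewrite /Tterm /Aq; move: E; rewrite /Tterm !normrM !normrX !normrN !normr_nat; by move=> <-.
Qed.

Lemma Aq_odd q n : odd n -> Aq q n = (q%:R : rat) ^+ n + 1.
Proof.
move=> on; rewrite /Aq exprNn -signr_odd on expr1 mulN1r -opprD normrN ger0_norm //.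
by rewrite addr_ge0 ?exprn_ge0 ?ler0n.
Qed.

Lemma Aq_even q n : (1 <= q)%N -> ~~ odd n -> Aq q n = (q%:R : rat) ^+ n - 1.
Proof.
move=> q1 en; rewrite /Aq exprNn -signr_odd (negbTE en) expr0 mul1r ger0_norm //.
by rewrite subr_ge0 exprn_ege1 // ler1n.
Qed.

Lemma powge (q k n : nat) : (2 <= q)%N -> (k <= n)%N -> 2 ^+ k <= (q%:R : rat) ^+ n.
Proof.
move=> q2 kn; apply: (le_trans (y := 2 ^+ n)).
  by apply: ler_weXn2l.
by apply: lerXn2r; rewrite ?nnegrE ?ler0n // (ler_nat _ 2 q).
Qed.

Arguments powge {q k n}.

Lemma powgeQ (q k n : nat) : (1 <= q)%N -> (k <= n)%N -> (q%:R : rat) ^+ k <= (q%:R : rat) ^+ n.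
Proof. by move=> q1 kn; apply: ler_weXn2l; rewrite // ler1n. Qed.

Arguments powgeQ {q k n}.

Lemma Aq_ub q n : (1 <= q)%N -> Aq q n <= (q%:R : rat) ^+ n + 1.
Proof.
move=> q1; case on: (odd n); first by rewrite Aq_odd.
by rewrite Aq_even ?on //; lra.
Qed.

Lemma Aq_lb q n : (1 <= q)%N -> (q%:R : rat) ^+ n - 1 <= Aq q n.
Proof.
move=> q1; case on: (odd n); last by rewrite Aq_even ?on.
by rewrite Aq_odd //; lra.
Qed.


Lemma A_le32 q n : (2 <= q)%N -> (1 <= n)%N -> Aq q n <= 3/2 * (q%:R : rat) ^+ n.
Proof.
move=> q2 n1; have := Aq_ub q n (ltnW q2); have := powge q2 n1; rewrite expr1; lra.
Qed.

Lemma A_le98 q n : (2 <= q)%N -> (2 <= n)%N -> Aq q n <= 9/8 * (q%:R : rat) ^+ n.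
Proof.
move=> q2 n2; case on: (odd n).
  have n3 : (3 <= n)%N by case: n n2 on => [|[|[|]]].
  have := powge q2 n3; rewrite Aq_odd //; lra.
have P := powge q2 n2; rewrite Aq_even ?on //; last lia. lra.
Qed.

Lemma A_le1716 q n : (2 <= q)%N -> (4 <= n)%N -> Aq q n <= 17/16 * (q%:R : rat) ^+ n.
Proof.
move=> q2 n4; have := powge q2 n4; have := Aq_ub q n (ltnW q2); lra.
Qed.

Lemma A_le_even q n : (1 <= q)%N -> ~~ odd n -> Aq q n <= 1 * (q%:R : rat) ^+ n.
Proof. by move=> q1 en; rewrite Aq_even //; lra. Qed.

Lemma A_geK q k n : (2 <= q)%N -> (k <= n)%N -> (1 - 1 / 2 ^+ k) * (q%:R : rat) ^+ n <= Aq q n.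
Proof.
move=> q2 kn; have P := powge q2 kn; have L := Aq_lb q n (ltnW q2).
have h2 : 0 < (2 : rat) ^+ k by rewrite exprn_gt0.
have H : 1 <= (q%:R : rat) ^+ n / 2 ^+ k by rewrite ler_pdivlMr // mul1r.
rewrite mulrBl !mul1r [_^-1 * _]mulrC; lra.
Qed.

Lemma A_ge9 q n : (2 <= q)%N -> (3 <= n)%N -> 9 <= Aq q n.
Proof.
move=> q2 n3; case on: (odd n).
  have := powge q2 n3; rewrite Aq_odd //; lra.
have n4 : (4 <= n)%N by case: n n3 on => [|[|[|[|]]]].
have := powge q2 n4; rewrite Aq_even ?on //; last lia. lra.
Qed.

Lemma A_gepow q k n : (1 <= q)%N -> (k <= n)%N -> (q%:R : rat) ^+ k - 1 <= Aq q n.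
Proof. move=> q1 kn; have := powgeQ q1 kn; have := Aq_lb q n q1; lra. Qed.

Lemma A1 q : Aq q 1 = (q%:R : rat) + 1.
Proof. by rewrite Aq_odd // expr1. Qed.
Lemma A2 q : (1 <= q)%N -> Aq q 2 = (q%:R : rat) ^+ 2 - 1.
Proof. by move=> q1; rewrite Aq_even. Qed.

Lemma test_num : (1 - 1 / 2 ^+ 3 : rat) = 7/8.
Proof. by []. Qed.

Lemma A_ge34 q n : (2 <= q)%N -> (2 <= n)%N -> 3/4 * (q%:R : rat) ^+ n <= Aq q n.
Proof. by move=> q2 n2; have := @A_geK q 2 n q2 n2. Qed.
Lemma A_ge78 q n : (2 <= q)%N -> (3 <= n)%N -> 7/8 * (q%:R : rat) ^+ n <= Aq q n.
Proof. by move=> q2 n2; have := @A_geK q 3 n q2 n2. Qed.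
Lemma A_ge1516 q n : (2 <= q)%N -> (4 <= n)%N -> 15/16 * (q%:R : rat) ^+ n <= Aq q n.
Proof. by move=> q2 n2; have := @A_geK q 4 n q2 n2. Qed.
Lemma A_ge15 q n : (2 <= q)%N -> (4 <= n)%N -> 15 <= Aq q n.
Proof. move=> q2 n4; have := @powge q 4 n q2 n4; have := Aq_lb q n (ltnW q2); lra. Qed.
Lemma A_ge0 q n : 0 <= Aq q n.
Proof. exact: normr_ge0. Qed.
Lemma Q_ge2 q : (2 <= q)%N -> 2 <= (q%:R : rat).
Proof. by move=> q2; rewrite (ler_nat _ 2 q). Qed.
Lemma Qpow_ge0 q n : 0 <= (q%:R : rat) ^+ n.
Proof. by rewrite exprn_ge0 ?ler0n. Qed.

Lemma prodK q a b (ua ub K : rat) : 0 <= ua -> 0 <= ub ->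
  Aq q a <= ua * (q%:R : rat) ^+ a -> Aq q b <= ub * (q%:R : rat) ^+ b -> ua * ub <= K ->
  Aq q a * Aq q b <= K * (q%:R : rat) ^+ a * (q%:R : rat) ^+ b.
Proof.
move=> ua0 ub0 Ha Hb Hk.
apply: (le_trans (y := (ua * (q%:R : rat) ^+ a) * (ub * (q%:R : rat) ^+ b))).
  by apply: ler_pM => //; apply: A_ge0.
have P1 := Qpow_ge0 q a; have P2 := Qpow_ge0 q b.
rewrite mulrACA -[K * _ * _]mulrA; apply: ler_wpM2r => //; by rewrite mulr_ge0.
Qed.

Definition Xf q d i j h : rat := Aq q (j - h) * Aq q (d - i - h) * (q%:R : rat) ^+ (d + 1 + h - j).
Definition Yf q d h : rat := Aq q (d - h) * Aq q h.+1.

Lemma keyY q d i j h (K rho : rat) : (h < j)%N -> (j <= d)%N ->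
  Aq q (d - h) * Aq q h.+1 <= K * (q%:R : rat) ^+ (d - h) * (q%:R : rat) ^+ h.+1 ->
  K * (q%:R : rat) ^+ (j - h) <= rho * (Aq q (j - h) * Aq q (d - i - h)) ->
  Yf q d h <= rho * Xf q d i j h.
Proof.
move=> hj jd H1 H2; rewrite /Yf /Xf; apply: (le_trans H1).
rewrite -mulrA -exprD (_ : (d - h + h.+1 = (j - h) + (d + 1 + h - j))%N); last lia.
rewrite exprD mulrA [rho * _]mulrA; apply: ler_wpM2r => //; exact: Qpow_ge0.
Qed.

Lemma ustep q d i j h (rho : rat) : (2 <= q)%N -> (h < j)%N -> (h < d - i)%N -> (j <= d)%N ->
  Yf q d h <= rho * Xf q d i j h ->
  `|Tterm q d i j h| <= rho * `|Tterm q d i j h.+1|.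
Proof.
move=> q2 hj hdi jd H.
have Xpos : 0 < Xf q d i j h.
  rewrite /Xf /Aq !mulr_gt0 ?normr_gt0 ?xpow_neq1 ?subn_gt0 //.
  by rewrite exprn_gt0 // ltr0n; lia.
have E := u_rec q d i j h q2 hj hdi jd.
rewrite -/(Xf q d i j h) -/(Yf q d h) in E.
rewrite -(ler_pM2r Xpos) E [rho * _]mulrC -mulrA.
by apply: ler_wpM2l => //; exact: normr_ge0.
Qed.

Lemma sumbound (u : nat -> rat) m (r1 r2 r3 c : rat) : (2 <= m)%N ->
  (forall h, 0 <= u h) -> 0 <= r1 -> 0 <= r2 -> 0 <= r3 -> 0 <= c -> (1 + c) * r3 <= c ->
  u m.-1 <= r1 * u m -> u (m - 2)%N <= r2 * u m.-1 ->
  (forall h, (h + 3 <= m)%N -> u h <= r3 * u h.+1) ->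
  \sum_(0 <= h < m) u h <= r1 * (1 + r2 * (1 + c)) * u m.
Proof.
move=> m2 u0 r10 r20 r30 c0 hc H1 H2 H3.
have claim : forall n, (n + 2 <= m)%N -> \sum_(0 <= h < n) u h <= c * u n.
  elim=> [|n IH] nm; first by rewrite big_geq // mulr_ge0.
  rewrite big_nat_recr //=.
  have IH' := IH ltac:(lia); have H := H3 n ltac:(lia).
  have := u0 n; have := u0 n.+1; nra.
clear H3; case: m m2 H1 H2 claim => [|[|n]] // _ H1 H2 claim.
rewrite !big_nat_recr //=.
have C := claim n ltac:(lia).
rewrite /= subn2 /= in H1 H2.
have U0 := u0 n; have U1 := u0 n.+1; have U2 := u0 n.+2.
have s1 : \sum_(0 <= i < n) u i + u n + u n.+1 <= (1 + (1 + c) * r2) * u n.+1.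
  have : (1 + c) * u n <= (1 + c) * (r2 * u n.+1) by apply: ler_wpM2l => //; lra.
  nra.
apply: (le_trans s1).
have s2 : (1 + (1 + c) * r2) * u n.+1 <= (1 + (1 + c) * r2) * (r1 * u n.+2).
  apply: ler_wpM2l => //; nra.
apply: (le_trans s2); rewrite mulrA; apply: ler_wpM2r => //; nra.
Qed.

Lemma fin (Q T S eps : rat) : 0 <= eps < 1 -> `|Q - T| <= S -> S <= eps * `|T| ->
  (1 - eps) * `|T| <= `|Q| /\ `|Q| <= (1 + eps) * `|T| /\ Num.sg Q = Num.sg T.
Proof.
move=> /andP [e0 e1] HS1 HS2.
have H : `|Q - T| <= eps * `|T| by apply: le_trans HS2.
have H1 : `|T| - `|Q - T| <= `|Q|.
  have := ler_normB Q (Q - T); rewrite (_ : Q - (Q - T) = T); [lra | ring].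
have H2 : `|Q| <= `|T| + `|Q - T|.
  have := ler_normD T (Q - T); rewrite (_ : T + (Q - T) = Q); [lra | ring].
split; first by lra. split; first by lra.
case: (ltrgt0P T) => [Tp|Tn|T0].
- have : 0 < Q.
    have := ler_norm (T - Q); rewrite distrC => HH.
    rewrite (gtr0_norm Tp) in H; nra.
  by move=> Qp; rewrite !gtr0_sg.
- have : Q < 0.
    have := ler_norm (Q - T) => HH.
    rewrite (ltr0_norm Tn) in H; nra.
  by move=> Qn; rewrite !ltr0_sg.
- rewrite T0 normr0 mulr0 subr0 in H.
  have : Q = 0 by apply/normr0_eq0/le_anti; rewrite H normr_ge0.
  by move=> ->; rewrite T0.
Qed.


Lemma Kfirst q d i : (2 <= q)%N -> (6 <= d)%N -> (1 <= i)%N -> (i <= d - 3)%N ->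
  Aq q i.+1 * Aq q (d - i) <= 153/128 * (q%:R : rat) ^+ i.+1 * (q%:R : rat) ^+ (d - i).
Proof.
move=> q2 d6 i1 id3.
case: (ltngtP i 2) => [i_lt2|i_gt2|i_eq2].
- have -> : i = 1%N by lia.
  apply: (@prodK q _ _ 1 (9/8)); try lra.
    exact: A_le_even (ltnW q2) _.
  apply: A_le98 => //; lia.
- apply: (@prodK q _ _ (17/16) (9/8)); try lra.
    apply: A_le1716 => //; lia.
  apply: A_le98 => //; lia.
- rewrite i_eq2; apply: (@prodK q _ _ (9/8) (17/16)); try lra.
    apply: A_le98 => //.
  apply: A_le1716 => //; lia.
Qed.

Lemma pp1 (Q : rat) : 2 <= Q -> 81/64 * Q <= 9/32 * ((Q + 1) * (Q ^+ 2 - 1)).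
Proof. move=> Q2.
  have -> : Q = (Q - 2) + 2 by ring.
  have : 0 <= Q - 2 by lra.
  move: (Q - 2) => t t0.
  have := exprn_ge0 2 t0. have := exprn_ge0 3 t0. have := exprn_ge0 4 t0. have := exprn_ge0 5 t0.
  lra. Qed.
Lemma pp2 (Q : rat) : 2 <= Q -> 81/16 * Q^+2 <= (Q^+2 - 1) * (Q^+3 - 1).
Proof. move=> Q2.
  have -> : Q = (Q - 2) + 2 by ring.
  have : 0 <= Q - 2 by lra.
  move: (Q - 2) => t t0.
  have := exprn_ge0 2 t0. have := exprn_ge0 3 t0. have := exprn_ge0 4 t0. have := exprn_ge0 5 t0.
  lra. Qed.
Lemma pp3 (Q : rat) : 2 <= Q -> 153/128 * Q <= 17/64 * ((Q + 1) * (Q + 1)).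
Proof. move=> Q2.
  have -> : Q = (Q - 2) + 2 by ring.
  have : 0 <= Q - 2 by lra.
  move: (Q - 2) => t t0.
  have := exprn_ge0 2 t0. have := exprn_ge0 3 t0. have := exprn_ge0 4 t0. have := exprn_ge0 5 t0.
  lra. Qed.
Lemma pp4 (Q : rat) : 2 <= Q -> 81/64 * Q^+2 <= 9/16 * ((Q^+2 - 1) * (Q^+2 - 1)).
Proof. move=> Q2.
  have -> : Q = (Q - 2) + 2 by ring.
  have : 0 <= Q - 2 by lra.
  move: (Q - 2) => t t0.
  have := exprn_ge0 2 t0. have := exprn_ge0 3 t0. have := exprn_ge0 4 t0. have := exprn_ge0 5 t0.
  lra. Qed.

Lemma ci1 q d i j h : (2 <= q)%N -> (1 <= i)%N -> (2 <= j)%N -> (j <= d - i - 1)%N -> h.+1 = j ->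
  Yf q d h <= 9/32 * Xf q d i j h.
Proof.
move=> q2 i1 j2 jd hj.
apply: (@keyY q d i j h (81/64)); try lia.
  apply: (@prodK q _ _ (9/8) (9/8)); try lra; apply: A_le98 => //; lia.
rewrite (_ : (j - h = 1)%N); last lia.
rewrite A1 expr1.
have Af := @A_gepow q 2 (d - i - h) (ltnW q2) ltac:(lia).
have Q2 := @Q_ge2 q q2.
have := @pp1 _ Q2.
have : ((q%:R : rat) + 1) * ((q%:R : rat) ^+ 2 - 1) <= ((q%:R : rat) + 1) * Aq q (d - i - h).
  by apply: ler_wpM2l => //; lra.
lra.
Qed.

Lemma ci2 q d i j h : (2 <= q)%N -> (1 <= i)%N -> (2 <= j)%N -> (j <= d - i - 1)%N -> h.+2 = j ->
  Yf q d h <= 1/3 * Xf q d i j h.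
Proof.
move=> q2 i1 j2 jd hj.
apply: (@keyY q d i j h (27/16)); try lia.
  apply: (@prodK q _ _ (9/8) (3/2)); try lra; [apply: A_le98 | apply: A_le32] => //; lia.
rewrite (_ : (j - h = 2)%N); last lia.
rewrite A2; last lia.
have Af := @A_gepow q 3 (d - i - h) (ltnW q2) ltac:(lia).
have Q2 := @Q_ge2 q q2.
have := @pp2 _ Q2.
have P2 : 3 <= (q%:R : rat) ^+ 2 - 1 by rewrite expr2; nra.
have : ((q%:R : rat) ^+ 2 - 1) * ((q%:R : rat) ^+ 3 - 1) <= ((q%:R : rat) ^+ 2 - 1) * Aq q (d - i - h).
  by apply: ler_wpM2l => //; lra.
lra.
Qed.

Lemma ci3 q d i j h : (2 <= q)%N -> (1 <= i)%N -> (2 <= j)%N -> (j <= d - i - 1)%N -> (h + 3 <= j)%N ->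
  Yf q d h <= 1/7 * Xf q d i j h.
Proof.
move=> q2 i1 j2 jd hj.
apply: (@keyY q d i j h (27/16)); try lia.
  apply: (@prodK q _ _ (9/8) (3/2)); try lra; [apply: A_le98 | apply: A_le32] => //; lia.
have Ac := @A_ge78 q (j - h) q2 ltac:(lia).
have Af := @A_ge15 q (d - i - h) q2 ltac:(lia).
have P := Qpow_ge0 q (j - h).
have : Aq q (j - h) * 15 <= Aq q (j - h) * Aq q (d - i - h).
  by apply: ler_wpM2l => //; exact: A_ge0.
lra.
Qed.

Lemma cii1 q d i j h : (2 <= q)%N -> (6 <= d)%N -> (1 <= i)%N -> (i <= d - 3)%N -> j = (d - i)%N -> h.+1 = j ->
  Yf q d h <= 17/64 * Xf q d i j h.
Proof.
move=> q2 d6 i1 id3 ej hj.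
apply: (@keyY q d i j h (153/128)); try lia.
  rewrite hj ej (_ : (d - h = i.+1)%N); last lia.
  exact: Kfirst.
rewrite (_ : (j - h = 1)%N); last lia.
rewrite (_ : (d - i - h = 1)%N); last lia.
rewrite A1 expr1.
have Q2 := @Q_ge2 q q2.
have := @pp3 _ Q2. lra.
Qed.

Lemma cii2 q d i j h : (2 <= q)%N -> (6 <= d)%N -> (1 <= i)%N -> (i <= d - 3)%N -> j = (d - i)%N -> h.+2 = j ->
  Yf q d h <= 9/16 * Xf q d i j h.
Proof.
move=> q2 d6 i1 id3 ej hj.
apply: (@keyY q d i j h (81/64)); try lia.
  apply: (@prodK q _ _ (9/8) (9/8)); try lra; apply: A_le98 => //; lia.
rewrite (_ : (j - h = 2)%N); last lia.
rewrite (_ : (d - i - h = 2)%N); last lia.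
rewrite A2; last lia.
have Q2 := @Q_ge2 q q2.
have := @pp4 _ Q2. lra.
Qed.

Lemma cii3 q d i j h : (2 <= q)%N -> (6 <= d)%N -> (1 <= i)%N -> (i <= d - 3)%N -> j = (d - i)%N -> (h + 3 <= j)%N ->
  Yf q d h <= 3/14 * Xf q d i j h.
Proof.
move=> q2 d6 i1 id3 ej hj.
apply: (@keyY q d i j h (27/16)); try lia.
  apply: (@prodK q _ _ (9/8) (3/2)); try lra; [apply: A_le98 | apply: A_le32] => //; lia.
rewrite (_ : (d - i - h = j - h)%N); last lia.
have Ac := @A_ge78 q (j - h) q2 ltac:(lia).
have Af := @A_ge9 q (j - h) q2 ltac:(lia).
have P := Qpow_ge0 q (j - h).
have : Aq q (j - h) * 9 <= Aq q (j - h) * Aq q (j - h).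
  by apply: ler_wpM2l => //; exact: A_ge0.
lra.
Qed.

Lemma ciii1 q d i j h : (2 <= q)%N -> (6 <= d)%N -> (1 <= i)%N -> (i <= d - 3)%N ->
  (d - i + 1 <= j)%N -> (j <= d)%N -> h.+1 = (d - i)%N ->
  Yf q d h <= 17/32 * Xf q d i j h.
Proof.
move=> q2 d6 i1 id3 ij jd hj.
apply: (@keyY q d i j h (153/128)); try lia.
  rewrite hj (_ : (d - h = i.+1)%N); last lia.
  exact: Kfirst.
rewrite (_ : (d - i - h = 1)%N); last lia.
rewrite A1.
have Ac := @A_ge34 q (j - h) q2 ltac:(lia).
have Q2 := @Q_ge2 q q2.
have P := Qpow_ge0 q (j - h).
have : Aq q (j - h) * 3 <= Aq q (j - h) * ((q%:R : rat) + 1).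
  by apply: ler_wpM2l; [exact: A_ge0 | lra].
lra.
Qed.

Lemma ciii2 q d i j h : (2 <= q)%N -> (6 <= d)%N -> (1 <= i)%N -> (i <= d - 3)%N ->
  (d - i + 1 <= j)%N -> (j <= d)%N -> h.+2 = (d - i)%N ->
  Yf q d h <= 27/56 * Xf q d i j h.
Proof.
move=> q2 d6 i1 id3 ij jd hj.
apply: (@keyY q d i j h (81/64)); try lia.
  apply: (@prodK q _ _ (9/8) (9/8)); try lra; apply: A_le98 => //; lia.
rewrite (_ : (d - i - h = 2)%N); last lia.
rewrite A2; last lia.
have Ac := @A_ge78 q (j - h) q2 ltac:(lia).
have Q2 := @Q_ge2 q q2.
have P2 : 3 <= (q%:R : rat) ^+ 2 - 1 by rewrite expr2; nra.
have P := Qpow_ge0 q (j - h).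
have : Aq q (j - h) * 3 <= Aq q (j - h) * ((q%:R : rat) ^+ 2 - 1).
  by apply: ler_wpM2l; [exact: A_ge0 | lra].
lra.
Qed.

Lemma ciii3 q d i j h : (2 <= q)%N -> (6 <= d)%N -> (1 <= i)%N -> (i <= d - 3)%N ->
  (d - i + 1 <= j)%N -> (j <= d)%N -> (h + 3 <= d - i)%N ->
  Yf q d h <= 1/5 * Xf q d i j h.
Proof.
move=> q2 d6 i1 id3 ij jd hj.
apply: (@keyY q d i j h (27/16)); try lia.
  apply: (@prodK q _ _ (9/8) (3/2)); try lra; [apply: A_le98 | apply: A_le32] => //; lia.
have Ac := @A_ge1516 q (j - h) q2 ltac:(lia).
have Af := @A_ge9 q (d - i - h) q2 ltac:(lia).
have P := Qpow_ge0 q (j - h).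
have : Aq q (j - h) * 9 <= Aq q (j - h) * Aq q (d - i - h).
  by apply: ler_wpM2l => //; exact: A_ge0.
lra.
Qed.

Lemma Qsplit q d i j :
  `|Qeig q d i j - Tterm q d i j (minn j (d - i))| <=
  \sum_(0 <= h < minn j (d - i)) `|Tterm q d i j h|.
Proof.
rewrite /Qeig big_nat_recr //= addrK.
exact: ler_norm_sum.
Qed.

Lemma case1 q d i j : (2 <= q)%N -> (1 <= i)%N -> (2 <= j)%N -> (j <= d - i - 1)%N ->
  `|Qeig q d i j - Tterm q d i j (minn j (d - i))| <= 25/64 * `|Tterm q d i j (minn j (d - i))|.
Proof.
move=> q2 i1 j2 jd.
apply: (le_trans (Qsplit q d i j)).
have -> : minn j (d - i) = j by apply/minn_idPl; lia.
have -> : (25/64 : rat) = 9/32 * (1 + 1/3 * (1 + 1/6)) by field.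
apply: (@sumbound _ j (9/32) (1/3) (1/7) (1/6)).
- lia.
- by move=> h; exact: normr_ge0.
- lra.
- lra.
- lra.
- lra.
- lra.
- have := @ustep q d i j j.-1 (9/32) q2 ltac:(lia) ltac:(lia) ltac:(lia) (@ci1 q d i j j.-1 q2 i1 j2 jd ltac:(lia)).
  by rewrite prednK //; lia.
- have := @ustep q d i j (j - 2) (1/3) q2 ltac:(lia) ltac:(lia) ltac:(lia) (@ci2 q d i j (j - 2) q2 i1 j2 jd ltac:(lia)).
  by rewrite (_ : (j - 2).+1 = j.-1)%N; last lia.
- move=> h hj.
  exact: (@ustep q d i j h (1/7) q2 ltac:(lia) ltac:(lia) ltac:(lia) (@ci3 q d i j h q2 i1 j2 jd hj)).
Qed.

Lemma case2 q d i j : (2 <= q)%N -> (6 <= d)%N -> (1 <= i)%N -> (i <= d - 3)%N -> j = (d - i)%N ->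
  `|Qeig q d i j - Tterm q d i j (minn j (d - i))| <=
    17/64 * (1 + 9/16 * (1 + 3/11)) * `|Tterm q d i j (minn j (d - i))|.
Proof.
move=> q2 d6 i1 id3 ej.
have j2 : (2 <= j)%N by lia.
apply: (le_trans (Qsplit q d i j)).
have -> : minn j (d - i) = j by apply/minn_idPl; lia.
apply: (@sumbound _ j (17/64) (9/16) (3/14) (3/11)).
- lia.
- by move=> h; exact: normr_ge0.
- lra.
- lra.
- lra.
- lra.
- lra.
- have := @ustep q d i j j.-1 (17/64) q2 ltac:(lia) ltac:(lia) ltac:(lia) (@cii1 q d i j j.-1 q2 d6 i1 id3 ej ltac:(lia)).
  by rewrite prednK //; lia.
- have := @ustep q d i j (j - 2) (9/16) q2 ltac:(lia) ltac:(lia) ltac:(lia) (@cii2 q d i j (j - 2) q2 d6 i1 id3 ej ltac:(lia)).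
  by rewrite (_ : (j - 2).+1 = j.-1)%N; last lia.
- move=> h hj.
  exact: (@ustep q d i j h (3/14) q2 ltac:(lia) ltac:(lia) ltac:(lia) (@cii3 q d i j h q2 d6 i1 id3 ej hj)).
Qed.

Lemma case3 q d i j : (2 <= q)%N -> (6 <= d)%N -> (1 <= i)%N -> (i <= d - 3)%N ->
  (d - i + 1 <= j)%N -> (j <= d)%N ->
  `|Qeig q d i j - Tterm q d i j (minn j (d - i))| <=
    17/32 * (1 + 27/56 * (1 + 1/4)) * `|Tterm q d i j (minn j (d - i))|.
Proof.
move=> q2 d6 i1 id3 ij jd.
apply: (le_trans (Qsplit q d i j)).
have -> : minn j (d - i) = (d - i)%N by apply/minn_idPr; lia.
apply: (@sumbound _ (d - i) (17/32) (27/56) (1/5) (1/4)).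
- lia.
- by move=> h; exact: normr_ge0.
- lra.
- lra.
- lra.
- lra.
- lra.
- have := @ustep q d i j (d - i).-1 (17/32) q2 ltac:(lia) ltac:(lia) jd (@ciii1 q d i j (d - i).-1 q2 d6 i1 id3 ij jd ltac:(lia)).
  by rewrite prednK //; lia.
- have := @ustep q d i j (d - i - 2) (27/56) q2 ltac:(lia) ltac:(lia) jd (@ciii2 q d i j (d - i - 2) q2 d6 i1 id3 ij jd ltac:(lia)).
  by rewrite (_ : (d - i - 2).+1 = (d - i).-1)%N; last lia.
- move=> h hj.
  exact: (@ustep q d i j h (1/5) q2 ltac:(lia) ltac:(lia) jd (@ciii3 q d i j h q2 d6 i1 id3 ij jd hj)).
Qed.

Theorem lemma5p4 (p k q d i j : nat) :
  prime p -> (0 < k)%N -> q = (p ^ k)%N ->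
  (6 <= d)%N -> (2 <= j <= d)%N -> (1 <= i <= d - 3)%N ->
  let hmax := minn j (d - i) in
  let T := Tterm q d i j hmax in
  let Q := Qeig q d i j in
  ((j <= d - i - 1)%N ->
     43%:R / 78%:R * `|T| <= `|Q| /\ `|Q| <= 113%:R / 78%:R * `|T|) /\
  (j = (d - i)%N ->
     691%:R / 1296%:R * `|T| <= `|Q| /\ `|Q| <= 1901%:R / 1296%:R * `|T|) /\
  ((d - i + 1 <= j)%N ->
     31%:R / 216%:R * `|T| <= `|Q| /\ `|Q| <= 401%:R / 216%:R * `|T|) /\
  Num.sg Q = Num.sg T.
Proof.
move=> pp k0 qE d6 /andP [j2 jd] /andP [i1 id3] hmax T Q.
have q2 : (2 <= q)%N.
  rewrite qE; have p2 := prime_gt1 pp.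
  have : (p <= p ^ k)%N by rewrite -{1}(expn1 p) leq_pexp2l // ltnW.
  lia.
have T0 : 0 <= `|T| by exact: normr_ge0.
have C1 : (j <= d - i - 1)%N ->
    (1 - 25/64) * `|T| <= `|Q| /\ `|Q| <= (1 + 25/64) * `|T| /\ Num.sg Q = Num.sg T.
  move=> H; apply: (@fin _ _ (25/64 * `|T|)); [lra | exact: case1 | lra].
have C2 : j = (d - i)%N ->
    (1 - 17/64 * (1 + 9/16 * (1 + 3/11))) * `|T| <= `|Q| /\
    `|Q| <= (1 + 17/64 * (1 + 9/16 * (1 + 3/11))) * `|T| /\ Num.sg Q = Num.sg T.
  move=> H; apply: (@fin _ _ (17/64 * (1 + 9/16 * (1 + 3/11)) * `|T|)); [lra | exact: case2 | lra].
have C3 : (d - i + 1 <= j)%N ->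
    (1 - 17/32 * (1 + 27/56 * (1 + 1/4))) * `|T| <= `|Q| /\
    `|Q| <= (1 + 17/32 * (1 + 27/56 * (1 + 1/4))) * `|T| /\ Num.sg Q = Num.sg T.
  move=> H; apply: (@fin _ _ (17/32 * (1 + 27/56 * (1 + 1/4)) * `|T|)); [lra | exact: case3 | lra].
split; [|split; [|split]].
- move=> H; have [A [B _]] := C1 H; split; lra.
- move=> H; have [A [B _]] := C2 H; split; lra.
- move=> H; have [A [B _]] := C3 H; split; lra.
- case: (ltngtP j (d - i)) => H.
  + by have [_ [_ ->]] := C1 ltac:(lia).
  + by have [_ [_ ->]] := C3 ltac:(lia).
  + by have [_ [_ ->]] := C2 H.
Qed.
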